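(* Let $q>2$, $n>1$, and let $f:H(n,q)\to\mathbb{R}$ be an additive function with $|S(f)|\le 2(q-1)q^{n-2}$. Then one of the following holds: (1) $f\equiv 0$; (2) there exist $i\in\{1,\dots,n\}$, $k\in\{0,\dots,q-1\}$ and a constant $c\neq 0$ such that $f(x)=c$ for $x\in T_k(i,n)$ and $f(x)=0$ otherwise; (3) there exist $i\ne j$ in $\{1,\dots,n\}$, $k,m\in\{0,\dots,q-1\}$ and a constant $c\ne 0$ such that $f(x)=c$ for $x\in T_k(i,n)\setminus T_m(j,n)$, $f(x)=-c$ for $x\in T_m(j,n)\setminus T_k(i,n)$, and $f(x)=0$ otherwise.
   Context: The Hamming graph $H(N,q)$ has vertex set $\{0,1,\dots,q-1\}^N$, two words being adjacent iff they differ in exactly one coordinate. For $f:H(N,q)\to\mathbb{R}$, its support is $S(f)=\{x: f(x)\ne 0\}$. $T_k(i,N)$ denotes the set of vertices of $H(N,q)$ whose $i$-th coordinate equals $k$. For $f:H(N,q)\to\mathbb{R}$ ($N\ge1$), $i\in\{1,\dots,N\}$ and $k,m\in\{0,\dots,q-1\}$, define $g_{i,k,m}:H(N-1,q)\to\mathbb{R}$ by $g_{i,k,m}(t)=f(x)-f(y)$, where $x$ and $y$ are obtained from $t$ by inserting $k$, resp. $m$, as the $i$-th coordinate. The function $f$ is called additive if all functions $g_{i,k,m}$ are constant. *)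

(* Defs.v *)
(* Values in an arbitrary realFieldType R (R = reals is a special case). *)
From HB Require Import structures.
From mathcomp Require Import all_boot all_order all_algebra.
Set Implicit Arguments. Unset Strict Implicit. Unset Printing Implicit Defensive.
Import Order.TTheory GRing.Theory Num.Theory.
Local Open Scope ring_scope.

(* Vertices of H(N,q): words x : 'I_N -> 'I_q (coordinates indexed 0..N-1). *)
Definition word (N q : nat) := {ffun 'I_N -> 'I_q}.

Definition ins (N q : nat) (i : 'I_N) (k : 'I_q) (t : word N.-1 q) : word N q :=
  [ffun j => match unlift i j with None => k | Some j' => t j' end].

Definition gfun (R : realFieldType) (N q : nat) (f : word N q -> R)
  (i : 'I_N) (k m : 'I_q) (t : word N.-1 q) : R :=
  f (ins i k t) - f (ins i m t).

Definition additive_fun (R : realFieldType) (N q : nat) (f : word N q -> R) : Prop :=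
  forall (i : 'I_N) (k m : 'I_q), exists c : R, forall t, gfun f i k m t = c.

Definition supp (R : realFieldType) (N q : nat) (f : word N q -> R) : {set word N q} :=
  [set x | f x != 0].

Definition T (N q : nat) (k : 'I_q) (i : 'I_N) : {set word N q} :=
  [set x : word N q | x i == k].

(* Main.v *)
Require Import Defs.
From HB Require Import structures.
From mathcomp Require Import all_boot all_order all_algebra.
From mathcomp Require Import zify ring lra.
Import Order.TTheory GRing.Theory Num.Theory.
Set Implicit Arguments. Unset Strict Implicit. Unset Printing Implicit Defensive.
Local Open Scope ring_scope.

Definition del (N q : nat) (i : 'I_N) (x : word N q) : word N.-1 q :=
  [ffun j => x (lift i j)].

Lemma ins_at N q (i : 'I_N) (k : 'I_q) t : ins i k t i = k.
Proof. by rewrite ffunE unlift_none. Qed.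

Lemma ins_lift N q (i : 'I_N) (k : 'I_q) t j : ins i k t (lift i j) = t j.
Proof. by rewrite ffunE liftK. Qed.

Lemma ins_del N q (i : 'I_N) (x : word N q) : ins i (x i) (del i x) = x.
Proof.
apply/ffunP => l; rewrite ffunE; case: unliftP => [j ->|->] //.
by rewrite ffunE.
Qed.

Lemma del_ins N q (i : 'I_N) (k : 'I_q) t : del i (ins i k t) = t.
Proof. by apply/ffunP => j; rewrite !ffunE liftK. Qed.

Lemma ins_neq N q (i : 'I_N) (k k' : 'I_q) t l : l != i -> ins i k t l = ins i k' t l.
Proof.
rewrite !ffunE; case: unliftP => [j ->|->] //; by rewrite eqxx.
Qed.

Lemma sum_ins N q (i : 'I_N) (F : word N q -> nat) :
  (\sum_(x : word N q) F x = \sum_(t : word N.-1 q) \sum_(k : 'I_q) F (ins i k t))%N.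
Proof.
rewrite pair_big /=.
rewrite (reindex (fun p : word N.-1 q * 'I_q => ins i p.2 p.1)) /=; last first.
  apply: onW_bij; exists (fun x => (del i x, x i)) => [[t k]|x] /=.
    by rewrite ins_at del_ins.
  by rewrite ins_del.
by [].
Qed.

Lemma card_supp (R : realFieldType) N q (f : word N q -> R) :
  #|supp f| = (\sum_(x : word N q) ((f x != 0)%R : nat))%N.
Proof.
rewrite /supp -sum1dep_card big_mkcond /=.
by apply: eq_bigr => x _; case: (f x != 0).
Qed.

Lemma count_line (R : realFieldType) q (a : 'I_q) (X e : R) :
  (\sum_(k : 'I_q) ((X + (if k == a then e else 0) != 0)%R : nat)
   = (X + e != 0)%R + q.-1 * (X != 0)%R)%N.
Proof.
rewrite (bigD1 a) //= eqxx; congr (_ + _)%N.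
rewrite (eq_bigr (fun _ => ((X != 0)%R : nat))) => [|k /negbTE ->]; last by rewrite addr0.
by rewrite sum_nat_const cardC1 card_ord.
Qed.

Lemma count_line2 (R : realFieldType) q (a : 'I_q) (X e1 e2 : R) :
  (\sum_(b : 'I_q) ((X + (if b == a then e2 else 0) + e1 != 0)%R
        + q.-1 * (X + (if b == a then e2 else 0) != 0)%R)
   = ((X + e2 + e1 != 0)%R + q.-1 * (X + e2 != 0)%R)
     + q.-1 * ((X + e1 != 0)%R + q.-1 * (X != 0)%R))%N.
Proof.
rewrite (bigD1 a) //= eqxx; congr (_ + _)%N.
rewrite (eq_bigr (fun _ => ((X + e1 != 0)%R + q.-1 * (X != 0)%R)%N)) => [|k /negbTE ->];
  last by rewrite addr0.
by rewrite sum_nat_const cardC1 card_ord.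
Qed.

Lemma connect_const (T : Type) n q (g : word n q -> T) :
  (forall (i : 'I_n) (x y : word n q), (forall l, l != i -> x l = y l) -> g x = g y) ->
  forall x y, g x = g y.
Proof.
move=> H x y.
pose z (j : nat) : word n q := [ffun l : 'I_n => if (l < j)%N then y l else x l].
have: forall j, (j <= n)%N -> g x = g (z j).
  elim => [_|j IH hj].
    by congr g; apply/ffunP => l; rewrite ffunE.
  rewrite IH ?(ltnW hj) //; apply: (H (Ordinal hj)) => l hl.
  have hne : (nat_of_ord l != j).
    by move: hl; apply: contra => /eqP e; apply/eqP/val_inj.
  by rewrite !ffunE ltnS (leq_eqVlt l j) (negbTE hne).
move/(_ n (leqnn n)) ->; congr g; apply/ffunP => l; by rewrite ffunE ltn_ord.
Qed.

Lemma sum_le_each (T : finType) (G : T -> nat) (a : nat) :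
  (forall s, a <= G s)%N -> (\sum_s G s <= \sum_(s : T) a)%N -> forall s, G s = a.
Proof.
move=> H1 H2 s0; apply/eqP; rewrite eqn_leq H1 andbT leqNgt; apply/negP => hlt.
move: H2; rewrite (bigD1 s0) //= [X in (_ <= X)%N](bigD1 s0) //=.
have := @leq_sum _ (index_enum T) (fun s => s != s0) (fun _ => a) G (fun s _ => H1 s). lia.
Qed.

Lemma dir (R : realFieldType) (n q : nat) (hq : (2 < q)%N) (hn : (1 < n)%N)
  (f : word n q -> R) (hadd : additive_fun f)
  (hS : (#|supp f| <= 2 * (q - 1) * q ^ (n - 2))%N) (i : 'I_n) :
  exists (k0 : 'I_q) (e : R), forall x y : word n q, (forall l, l != i -> x l = y l) ->
    f x - (if x i == k0 then e else 0) = f y - (if y i == k0 then e else 0).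
Proof.
have cnt := card_supp f; rewrite (sum_ins i) in cnt.
have [t ht] : exists t : word n.-1 q,
    (\sum_(k : 'I_q) ((f (ins i k t) != 0)%R : nat) < 2)%N.
  case: (boolP [exists t, (\sum_(k : 'I_q) ((f (ins i k t) != 0)%R : nat) < 2)%N]).
    by move/existsP.
  move/existsPn => H; exfalso.
  have : (\sum_(t : word n.-1 q) 2%N <= #|supp f|)%N.
    by rewrite cnt; apply: leq_sum => t _; rewrite leqNgt H.
  rewrite sum_nat_const card_ffun !card_ord.
  have -> : n.-1 = (n - 2).+1 by lia.
  rewrite expnS.
  have : (0 < q ^ (n - 2))%N by rewrite expn_gt0; lia.
  move: hS; set Q := (q ^ (n - 2))%N. nia.
have [k0 [e hline]] : exists (k0 : 'I_q) (e : R),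
    forall k, f (ins i k t) = if k == k0 then e else 0.
  case: (pickP (fun k => f (ins i k t) != 0)) => [k0 hk0 | hnone].
    exists k0, (f (ins i k0 t)) => k.
    case: eqP => [-> //|/eqP hk].
    move: ht; rewrite (bigD1 k0) //= hk0 add1n !ltnS leqn0 sum_nat_eq0.
    move/forallP/(_ k); rewrite hk /=.
    by case: (f (ins i k t) =P 0).
  have q0 : (0 < q)%N by lia.
  exists (Ordinal q0), 0 => k; rewrite if_same.
  by apply/eqP; move: (hnone k) => /= /negbFE.
exists k0, e => x y hxy.
have hd : del i x = del i y.
  by apply/ffunP => j; rewrite !ffunE hxy // eq_sym neq_lift.
rewrite -(ins_del i x) -(ins_del i y) hd !ins_at.
have [c hc] := hadd i (x i) (y i).
have h1 := hc (del i y); have h2 := hc t.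
move: h1 h2; rewrite /gfun !hline.
move: (f (ins i (x i) (del i y))) (f (ins i (y i) (del i y))) => a b.
move: (if x i == k0 then e else 0) (if y i == k0 then e else 0) => u v.
move=> *; lra.
Qed.

Definition Gcnt (R : realFieldType) (q : nat) (X e1 e2 : R) : nat :=
  (((X + e2 + e1 != 0)%R + q.-1 * (X + e2 != 0)%R)
     + q.-1 * ((X + e1 != 0)%R + q.-1 * (X != 0)%R))%N.

Lemma key (R : realFieldType) q (hq : (2 < q)%N) (X e1 e2 : R)
  (h1 : e1 != 0) (h2 : e2 != 0) :
  (2 * (q - 1) <= Gcnt q X e1 e2)%N /\
  ((Gcnt q X e1 e2 <= 2 * (q - 1))%N -> X = 0 /\ e1 + e2 = 0).
Proof.
rewrite /Gcnt.
case: (X =P 0) => [->|hX].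
  rewrite !add0r h1 h2 /=.
  case: (e2 + e1 =P 0) => [he|he] /=.
    split; first lia. move=> _; split => //; lra.
  split; first lia. move=> H; exfalso; lia.
case: (X + e1 =P 0) => ha; case: (X + e2 =P 0) => hb /=.
- have hc : (X + e2 + e1 != 0).
    by apply/eqP => hc; apply: hX; lra.
  rewrite hc /=; split; first nia. move=> H; exfalso; nia.
- split; first nia. move=> H; exfalso; nia.
- split; first nia. move=> H; exfalso; nia.
- split; first nia. move=> H; exfalso; nia.
Qed.

Theorem theorem2 (R : realFieldType) (n q : nat) (hq : (2 < q)%N) (hn : (1 < n)%N)
  (f : word n q -> R) (hadd : additive_fun f)
  (hS : (#|supp f| <= 2 * (q - 1) * q ^ (n - 2))%N) :
  (forall x, f x = 0)
  \/ (exists (i : 'I_n) (k : 'I_q) (c : R), c != 0 /\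
        forall x, f x = (if x \in T k i then c else 0))
  \/ (exists (i j : 'I_n) (k m : 'I_q) (c : R), i != j /\ c != 0 /\
        forall x, f x = (if (x \in T k i) && (x \notin T m j) then c
                         else if (x \in T m j) && (x \notin T k i) then - c
                         else 0)).
Proof.
have [kI hk] := fin_all_exists (dir hq hn hadd hS).
have [eI hdir] := fin_all_exists hk.
pose E (i : 'I_n) (x : word n q) := if x i == kI i then eI i else 0.
have q0 : (0 < q)%N by lia.
pose x0 : word n q := [ffun _ => Ordinal q0].
case: (boolP [exists i, exists j, (i != j) && (eI i != 0) && (eI j != 0)]).
- move/existsP => [i /existsP [j /andP [/andP [hij hi] hj]]].
  right; right.
  pose C x := f x - E i x - E j x.
  have hCi : forall x y : word n q, (forall l, l != i -> x l = y l) -> C x = C y.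
    move=> x y hxy.
    have h1 : f x - E i x = f y - E i y := hdir i x y hxy.
    have h2 : E j x = E j y by rewrite /E (hxy j); last by rewrite eq_sym.
    rewrite /C h2; lra.
  have hCj : forall x y : word n q, (forall l, l != j -> x l = y l) -> C x = C y.
    move=> x y hxy.
    have h1 : f x - E j x = f y - E j y := hdir j x y hxy.
    have h2 : E i x = E i y by rewrite /E (hxy i).
    rewrite /C h2; lra.
  have [j' hj' hu] := unlift_some hij.
  pose Cs (s : word n.-1.-1 q) := C (ins i (kI i) (ins j' (kI j) s)).
  have hxj : forall (k b : 'I_q) (s : word n.-1.-1 q), (ins i k (ins j' b s)) j = b.
    by move=> k b s; rewrite hj' ins_lift ins_at.
  have hf : forall (s : word n.-1.-1 q) (k b : 'I_q), f (ins i k (ins j' b s))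
      = Cs s + (if b == kI j then eI j else 0) + (if k == kI i then eI i else 0).
    move=> s k b.
    have hC : C (ins i k (ins j' b s)) = Cs s.
      rewrite /Cs (hCi _ (ins i (kI i) (ins j' b s))); last by move=> l hl; apply: ins_neq.
      apply: hCj => l hl; have [e|hli] := eqVneq l i; first by subst l; rewrite !ins_at.
      rewrite eq_sym in hli; have [l' el _] := unlift_some hli.
      rewrite el !ins_lift; apply: ins_neq.
      by apply/negP => /eqP hl'; move: hl; rewrite el hl' -hj' eqxx.
    have hEi : E i (ins i k (ins j' b s)) = if k == kI i then eI i else 0.
      by rewrite /E ins_at.
    have hEj : E j (ins i k (ins j' b s)) = if b == kI j then eI j else 0.
      by rewrite /E hxj.
    rewrite -hC -hEi -hEj /C; lra.
  have cnt : #|supp f| = (\sum_s \sum_(b : 'I_q) \sum_(k : 'I_q)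
                          ((f (ins i k (ins j' b s)) != 0)%R : nat))%N.
    by rewrite card_supp (sum_ins i) (sum_ins j').
  have hG : forall s, (\sum_(b : 'I_q) \sum_(k : 'I_q)
                          ((f (ins i k (ins j' b s)) != 0)%R : nat))%N
                      = Gcnt q (Cs s) (eI i) (eI j).
    move=> s.
    rewrite (eq_bigr (fun b => ((Cs s + (if b == kI j then eI j else 0) + eI i != 0)%R
         + q.-1 * (Cs s + (if b == kI j then eI j else 0) != 0)%R)%N)); last first.
      move=> b _.
      rewrite (eq_bigr (fun k => ((Cs s + (if b == kI j then eI j else 0)
                     + (if k == kI i then eI i else 0)) != 0)%R : nat)); last first.
        by move=> k _; rewrite hf.
      by rewrite count_line.
    by rewrite count_line2.
  have hsum : forall s, Gcnt q (Cs s) (eI i) (eI j) = (2 * (q - 1))%N.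
    apply: (sum_le_each (G := fun s => Gcnt q (Cs s) (eI i) (eI j))).
      by move=> s; case: (key hq (Cs s) hi hj).
    rewrite sum_nat_const card_ffun !card_ord.
    rewrite -(eq_bigr _ (fun s _ => hG s)) -cnt.
    have -> : n.-1.-1 = (n - 2)%N by lia.
    move: hS; lia.
  have hC0 : forall s, Cs s = 0 /\ eI i + eI j = 0.
    by move=> s; case: (key hq (Cs s) hi hj) => _; apply; rewrite hsum.
  exists i, j, (kI i), (kI j), (eI i); split => //; split => // x.
  have hx : x = ins i (x i) (ins j' (x j) (del j' (del i x))).
    have e1 : del i x j' = x j by rewrite ffunE -hj'.
    by rewrite -e1 !ins_del.
  rewrite {1}hx hf !inE.
  have [-> he] := hC0 (del j' (del i x)).
  have -> : eI j = - eI i by lra.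
  case: (x i == kI i); case: (x j == kI j) => /=; lra.
- move=> hnC; case: (boolP [exists i, eI i != 0]).
  + move/existsP=> [i hi]; right; left.
    have hoth : forall l, l != i -> eI l = 0.
      move=> l hl; apply/eqP; rewrite -[_ == 0]negbK; apply/negP => hl0.
      move/negP: hnC; apply; apply/existsP; exists i; apply/existsP; exists l.
      by rewrite eq_sym hl hi hl0.
    pose g x := f x - E i x.
    have hg : forall x, g x = g x0.
      move=> x; apply: connect_const => l y z hyz; rewrite /g.
      case: (l =P i) => [e|/eqP hli]; first by subst l; exact: (hdir i y z hyz).
      have := hdir l y z hyz; rewrite (hoth l hli) !if_same !subr0 => ->.
      by rewrite /E (hyz i); last by rewrite eq_sym.
    set S := g x0.
    have hfx : forall x, f x = S + E i x.
      by move=> x; rewrite /S -(hg x) /g; lra.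
    have hS0 : S = 0.
      apply/eqP; rewrite -[_ == 0]negbK; apply/negP => hS0.
      have cnt := card_supp f; rewrite (sum_ins i) in cnt.
      have hl : forall t, (\sum_(k : 'I_q) ((f (ins i k t) != 0)%R : nat))%N
                 = ((S + eI i != 0)%R + q.-1 * (S != 0)%R)%N.
        move=> t; rewrite -(count_line (kI i)); apply: eq_bigr => k _.
        by rewrite hfx /E ins_at.
      rewrite (eq_bigr _ (fun t _ => hl t)) sum_nat_const card_ffun !card_ord hS0 muln1 in cnt.
      move: hS; rewrite cnt.
      have -> : n.-1 = (n - 2).+1 by lia.
      rewrite expnS.
      have : (0 < q ^ (n - 2))%N by rewrite expn_gt0; lia.
      set Q := (q ^ (n - 2))%N. move=> hQ. rewrite mulnAC leq_pmul2r //. case: (S + eI i != 0) => /=; nia.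
    exists i, (kI i), (eI i); split => // x.
    by rewrite hfx hS0 add0r inE.
  + move/existsPn => hall; left.
    have hz : forall l, eI l = 0.
      by move=> l; apply/eqP; move: (hall l); rewrite negbK.
    have hc : forall x, f x = f x0.
      move=> x; apply: connect_const => l y z hyz.
      by have := hdir l y z hyz; rewrite hz !if_same !subr0.
    move=> x; rewrite hc; apply/eqP; rewrite -[_ == 0]negbK; apply/negP => h0.
    have cnt := card_supp f.
    rewrite (eq_bigr (fun _ => ((f x0 != 0)%R : nat))) in cnt; last by move=> y _; rewrite hc.
    rewrite sum_nat_const card_ffun !card_ord h0 muln1 in cnt.
    move: hS; rewrite cnt.
    have -> : (q ^ n = q * q * q ^ (n - 2))%N.
      have e : n = ((n - 2).+2)%N by lia.
      by rewrite {1}e !expnS mulnA.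
    have : (0 < q ^ (n - 2))%N by rewrite expn_gt0; lia.
    set Q := (q ^ (n - 2))%N. nia.
Qed.
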